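(* Let $X$ be an order continuous rearrangement invariant sequence space with the Fatou property and let $F$ be an Orlicz function. Assume that the Calderón–Lozanovskiĭ class is closed under the Cesàro operator $C$. If $F$ vanishes only at zero and does not satisfy the $\Delta_2(0)$-condition, then the space $C(X_F)$ contains a lattice isometric copy of $\ell_\infty$.
   Context: A rearrangement invariant sequence space is a Banach space $X$ of real sequences with the ideal property ($|x|\le|y|$, $y\in X$ imply $x\in X$, $\|x\|_X\le\|y\|_X$), containing a sequence with all coordinates nonzero, in which equimeasurable sequences have equal norms. Order continuous: every $x\in X$ satisfies $\|x^{(n)}\|_X\to0$ whenever $0\le x^{(n)}\le|x|$, $x^{(n)}\downarrow0$. Fatou property: $0\le x^{(n)}\uparrow x$, $\sup\|x^{(n)}\|_X<\infty$ imply $x\in X$ and $\|x^{(n)}\|_X\uparrow\|x\|_X$. An Orlicz function is a non-decreasing convex $F:[0,\infty)\to[0,\infty]$ with $F(0)=0$. The Calderón–Lozanovskiĭ space $X_F$ consists of sequences $f$ with $\|f\|_{X_F}=\inf\{\lambda>0:\|F(|f|/\lambda)\|_X\le1\}<\infty$; the Calderón–Lozanovskiĭ class is $\{f\in X_F:\|F(|f|)\|_X<\infty\}$, and it is closed under $C$ if $f$ in the class implies $C(|f|)$ is in the class. The discrete Cesàro operator is $C(x)_n=\frac1n\sum_{k=1}^nx_k$, and $C(X_F)=\{x: C(|x|)\in X_F\}$ with norm $\|C(|x|)\|_{X_F}$. $F$ satisfies $\Delta_2(0)$ if there are $K>0$, $u_0>0$ with $F(u_0)>0$ and $F(2u)\le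 KF(u)$ for $0\le u\le u_0$. A lattice isometric copy of $\ell_\infty$ is the image of a linear isometric lattice-homomorphic embedding of $\ell_\infty$. *)

(* Defs.v *)
(* Sequences are indexed by nat: x 0 is the paper's x_1. *)
From HB Require Import structures.
From mathcomp Require Import all_boot all_order all_algebra.
From mathcomp Require Import all_classical all_reals all_analysis.
Set Implicit Arguments. Unset Strict Implicit. Unset Printing Implicit Defensive.
Import Order.TTheory GRing.Theory Num.Theory.
Local Open Scope classical_set_scope.
Local Open Scope ring_scope.
Local Open Scope card_scope.

Definition abss {R : realType} (x : nat -> R) : nat -> R := fun n => `|x n|.

Definition equimeasurable {R : realType} (x y : nat -> R) : Prop :=
  forall l : R, 0 < l -> [set n | l < `|x n|] #= [set n | l < `|y n|].

(* A rearrangement invariant Banach sequence space: X is the underlying set of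
   sequences, nrm its norm (relevant on X only). *)
Record ri_space {R : realType} (X : set (nat -> R)) (nrm : (nat -> R) -> R) : Prop := {
  ri_zero : X (fun _ => 0);
  ri_add : forall x y, X x -> X y -> X (fun n => x n + y n);
  ri_scale : forall (a : R) x, X x -> X (fun n => a * x n);
  ri_nrm_ge0 : forall x, X x -> 0 <= nrm x;
  ri_nrm_eq0 : forall x, X x -> nrm x = 0 -> x = (fun _ => 0);
  ri_nrm_hom : forall (a : R) x, X x -> nrm (fun n => a * x n) = `|a| * nrm x;
  ri_nrm_tri : forall x y, X x -> X y -> nrm (fun n => x n + y n) <= nrm x + nrm y;
  ri_complete : forall u : nat -> nat -> R, (forall k, X (u k)) ->
    (forall e : R, 0 < e -> exists N, forall m n, (N <= m)%N -> (N <= n)%N ->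
        nrm (fun i => u m i - u n i) < e) ->
    exists x, X x /\ forall e : R, 0 < e -> exists N, forall n, (N <= n)%N ->
        nrm (fun i => u n i - x i) < e;
  ri_ideal : forall x y, X y -> (forall n, `|x n| <= `|y n|) -> X x /\ nrm x <= nrm y;
  ri_full : exists x, X x /\ forall n, x n != 0;
  ri_rearr : forall x y, X y -> equimeasurable x y -> X x /\ nrm x = nrm y
}.

Definition order_continuous {R : realType} (X : set (nat -> R)) (nrm : (nat -> R) -> R) : Prop :=
  forall x, X x -> forall xs : nat -> nat -> R,
    (forall k n, 0 <= xs k n <= `|x n|) ->
    (forall k n, xs k.+1 n <= xs k n) ->
    (forall n, (fun k => xs k n) @ \oo --> 0) ->
    (fun k => nrm (xs k)) @ \oo --> 0.

Definition fatou_property {R : realType} (X : set (nat -> R)) (nrm : (nat -> R) -> R) : Prop :=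
  forall (x : nat -> R) (xs : nat -> nat -> R),
    (forall k n, 0 <= xs k n) ->
    (forall k n, xs k n <= xs k.+1 n) ->
    (forall n, (fun k => xs k n) @ \oo --> (x n : R^o)) ->
    (forall k, X (xs k)) -> (exists M : R, forall k, nrm (xs k) <= M) ->
    X x /\ (forall k, nrm (xs k) <= nrm (xs k.+1)) /\ (fun k => nrm (xs k)) @ \oo --> (nrm x : R^o).

(* Orlicz function F : [0,oo) -> [0,oo] (values at negative arguments irrelevant) *)
Definition orlicz {R : realType} (F : R -> \bar R) : Prop :=
  F 0 = 0%E /\
  (forall u : R, 0 <= u -> (0 <= F u)%E) /\
  (forall u v : R, 0 <= u -> u <= v -> (F u <= F v)%E) /\
  (forall u v t : R, 0 <= u -> 0 <= v -> 0 <= t -> t <= 1 ->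
     (F (t * u + (1 - t) * v)%R <= t%:E * F u + (1 - t)%:E * F v)%E).

Definition inXe {R : realType} (X : set (nat -> R)) (g : nat -> \bar R) : Prop :=
  (forall n, g n \is a fin_num) /\ X (fun n => fine (g n)).
Definition nrmXe {R : realType} (nrm : (nat -> R) -> R) (g : nat -> \bar R) : R :=
  nrm (fun n => fine (g n)).

Definition XF_adm {R : realType} (X : set (nat -> R)) (nrm : (nat -> R) -> R)
  (F : R -> \bar R) (f : nat -> R) : set R :=
  [set l | 0 < l /\ inXe X (fun n => F (`|f n| / l)) /\
           nrmXe nrm (fun n => F (`|f n| / l)) <= 1].

Definition XF {R : realType} (X : set (nat -> R)) nrm (F : R -> \bar R) : set (nat -> R) :=
  [set f | XF_adm X nrm F f !=set0].
Definition XF_norm {R : realType} (X : set (nat -> R)) nrm (F : R -> \bar R) (f : nat -> R) : R :=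
  inf (XF_adm X nrm F f).

Definition CL_class {R : realType} (X : set (nat -> R)) nrm (F : R -> \bar R) : set (nat -> R) :=
  [set f | XF X nrm F f /\ inXe X (fun n => F `|f n|)].

(* discrete Cesaro operator: C(x)_n = 1/n sum_{k=1}^n x_k, shifted to index 0 *)
Definition cesaro {R : realType} (x : nat -> R) : nat -> R :=
  fun n => (n.+1%:R)^-1 * \sum_(k < n.+1) x k.

Definition CL_closed_cesaro {R : realType} (X : set (nat -> R)) nrm (F : R -> \bar R) : Prop :=
  forall f, CL_class X nrm F f -> CL_class X nrm F (cesaro (abss f)).

Definition CXF {R : realType} (X : set (nat -> R)) nrm (F : R -> \bar R) : set (nat -> R) :=
  [set x | XF X nrm F (cesaro (abss x))].
Definition CXF_norm {R : realType} (X : set (nat -> R)) nrm (F : R -> \bar R) (x : nat -> R) : R :=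
  XF_norm X nrm F (cesaro (abss x)).

Definition Delta2_0 {R : realType} (F : R -> \bar R) : Prop :=
  exists K u0 : R, 0 < K /\ 0 < u0 /\ (0 < F u0)%E /\
    forall u : R, 0 <= u -> u <= u0 -> (F (2 * u)%R <= K%:E * F u)%E.

Definition linf {R : realType} (a : nat -> R) : Prop := exists M : R, forall n, `|a n| <= M.
Definition linf_norm {R : realType} (a : nat -> R) : R := sup (range (fun n => `|a n|)).

Definition contains_lattice_isometric_linf {R : realType}
  (Y : set (nat -> R)) (nY : (nat -> R) -> R) : Prop :=
  exists T : (nat -> R) -> (nat -> R),
    (forall a, linf a -> Y (T a)) /\
    (forall a b, linf a -> linf b -> T (fun n => a n + b n) = (fun n => T a n + T b n)) /\
    (forall (c : R) a, linf a -> T (fun n => c * a n) = (fun n => c * T a n)) /\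
    (forall a b, linf a -> linf b ->
       T (fun n => Num.max (a n) (b n)) = (fun n => Num.max (T a n) (T b n))) /\
    (forall a, linf a -> nY (T a) = linf_norm a).

(* Main.v *)
Require Import Defs.
From HB Require Import structures.
From mathcomp Require Import all_boot all_order all_algebra.
From mathcomp Require Import all_classical all_reals all_analysis.
Import Order.TTheory GRing.Theory Num.Theory.
Local Open Scope ring_scope.
From mathcomp Require Import ring lra.
From mathcomp Require Import zify.
Local Open Scope classical_set_scope.
Set Implicit Arguments. Unset Strict Implicit. Unset Printing Implicit Defensive.
Section FFacts.
Variable R : realType.
Variable F : R -> \bar R.
Hypothesis hF : orlicz F.
Hypothesis hF0 : forall u : R, 0 <= u -> F u = 0%E -> u = 0.
Hypothesis hD : ~ Delta2_0 F.

Lemma F0 : F 0 = 0%E. Proof. by case: hF. Qed.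
Lemma Fge0 u : 0 <= u -> (0 <= F u)%E. Proof. by case: hF => _ [+ _]; apply. Qed.
Lemma Fmono u v : 0 <= u -> u <= v -> (F u <= F v)%E.
Proof. by case: hF => _ [_ [+ _]]; apply. Qed.
Lemma Fpos u : 0 < u -> (0 < F u)%E.
Proof.
move=> u0; rewrite lt_neqAle Fge0 ?ltW // andbT; apply/eqP => h.
by have := hF0 (ltW u0) (esym h) => h0; move: u0; rewrite h0 ltxx.
Qed.

Lemma bern (t : R) m : 1 <= t -> 1 + m%:R * (t - 1) <= t ^+ m.
Proof.
move=> t1; elim: m => [|m IH]; first by rewrite mul0r addr0 expr0.
rewrite exprS -natr1.
have h0 : 0 <= m%:R * (t - 1) by apply: mulr_ge0; [exact: ler0n| lra].
nra.
Qed.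

Lemma Dbig (th Rr eta : R) : 1 < th -> 0 < Rr -> 0 < eta ->
  exists u, [/\ 0 < u, u <= eta & (Rr%:E * F u < F (th * u))%E].
Proof.
move=> th1 Rr0 eta0; apply: contrapT => H; apply: hD.
have H' : forall u, 0 < u -> u <= eta -> (F (th * u) <= Rr%:E * F u)%E.
  move=> u u0 ue; rewrite leNgt; apply/negP => hlt; apply: H; by exists u.
pose m := Num.Def.archi_bound ((th - 1)^-1).
have hm : 2 <= th ^+ m.
  have hi : 0 <= (th - 1)^-1 by rewrite invr_ge0; lra.
  have := archi_boundP hi; rewrite -/m => hm.
  have := bern m (ltW th1).
  have : 1 < m%:R * (th - 1).
    by rewrite -ltr_pdivrMr ?mul1r; lra.
  lra.
have thm0 : 0 < th ^+ m by apply: exprn_gt0; lra.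
pose M := Num.max Rr 1.
have M1 : 1 <= M by rewrite le_max lexx orbT.
exists (M ^+ m), (eta / th ^+ m); split; [|split; [|split]].
- by apply: exprn_gt0; lra.
- by apply: divr_gt0.
- by apply: Fpos; apply: divr_gt0.
move=> u u0 uu0.
have [->|unz] := eqVneq u 0.
  by rewrite mulr0 F0 mule0.
have upos : 0 < u by rewrite lt_neqAle eq_sym unz.
have key : forall j, (j <= m)%N -> (F (th ^+ j * u) <= (M ^+ j)%:E * F u)%E.
  elim=> [|j IH] jm; first by rewrite !expr0 mul1r mul1e.
  have jm' : (j <= m)%N by apply: ltnW.
  have tj0 : 0 < th ^+ j * u by apply: mulr_gt0 => //; apply: exprn_gt0; lra.
  have tjle : th ^+ j * u <= eta.
    have : th ^+ j <= th ^+ m by apply: ler_weXn2l => //; lra.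
    have : u * th ^+ m <= eta by rewrite -ler_pdivlMr.
    nra.
  rewrite exprS -mulrA.
  apply: (le_trans (H' _ tj0 tjle)).
  rewrite exprS EFinM -muleA.
  have hFj : (0 <= F (th ^+ j * u))%E by apply: Fge0; apply: ltW.
  apply: (@le_trans _ _ (M%:E * F (th ^+ j * u))%E).
    by apply: lee_wpmul2r => //; rewrite lee_fin le_max lexx.
  apply: lee_wpmul2l; [rewrite lee_fin; lra| exact: IH].
apply: (le_trans _ (key m (leqnn m))).
apply: Fmono; first lra.
nra.
Qed.
End FFacts.
Section FFacts2.
Variable R : realType.
Variable F : R -> \bar R.
Hypothesis hF : orlicz F.
Hypothesis hF0 : forall u : R, 0 <= u -> F u = 0%E -> u = 0.
Hypothesis hD : ~ Delta2_0 F.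

Lemma fin_le (x y : \bar R) : (0 <= x)%E -> (x <= y)%E -> y \is a fin_num ->
  x \is a fin_num /\ fine x <= fine y.
Proof.
move=> x0 xy yf.
have xf : x \is a fin_num.
  rewrite ge0_fin_numE //; apply: (le_lt_trans xy).
  by rewrite ltey; move: yf; rewrite fin_numE => /andP[].
by split => //; apply: fine_le.
Qed.

Lemma Ffin_exists : exists b, 0 < b /\ F b \is a fin_num.
Proof.
have [u [u0 _ hu]] := @Dbig R F hF hF0 hD 2 1 1 (ltr_nat _ 1 2) ltr01 ltr01.
exists u; split => //.
rewrite ge0_fin_numE; last by apply: Fge0 => //; apply: ltW.
by apply: (lt_le_trans _ (leey (F (2 * u)))); rewrite mul1e in hu.
Qed.

Lemma Fconvb b x : 0 < b -> 0 <= x -> x <= b -> (F x <= (x / b)%:E * F b)%E.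
Proof.
move=> b0 x0 xb.
case: hF => hF00 [_ [_ hc]].
have t0 : 0 <= x / b by apply: divr_ge0 => //; apply: ltW.
have t1 : x / b <= 1 by rewrite ler_pdivrMr // mul1r.
have := hc b 0 (x / b) (ltW b0) (lexx 0) t0 t1.
rewrite mulr0 addr0 mulfVK ?gt_eqF // hF00 mule0 adde0 //.
Qed.
End FFacts2.
Definition ind {R : realType} (lo hi : nat) : nat -> R :=
  fun n => if (lo <= n < hi)%N then 1 else 0.

Section XFacts.
Variable R : realType.
Variable X : set (nat -> R).
Variable nrm : (nat -> R) -> R.
Hypothesis hri : ri_space X nrm.
Hypothesis hoc : order_continuous X nrm.
Hypothesis hfat : fatou_property X nrm.

Lemma nrm0 : nrm (fun _ => 0) = 0.
Proof.
have -> : (fun _ : nat => (0:R)) = (fun n => 0 * (fun _ => (0:R)) n).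
  by apply/funext => n; rewrite mul0r.
by rewrite (ri_nrm_hom hri 0 (ri_zero hri)) normr0 mul0r.
Qed.

Lemma ind_ge0 lo hi n : 0 <= @ind R lo hi n.
Proof. by rewrite /ind; case: ifP. Qed.
Lemma ind_le1 lo hi n : @ind R lo hi n <= 1.
Proof. by rewrite /ind; case: ifP. Qed.

Lemma e_X j : X (@ind R j j.+1).
Proof.
have [x [Xx hx]] := ri_full hri.
have Xy := ri_scale hri (x j)^-1 Xx.
apply: (ri_ideal hri Xy _).1 => n.
rewrite /ind normrM normrV ?unitfE ?normr_eq0 ?hx //.
case: ifP => hn; last by rewrite normr0 mulr_ge0 // invr_ge0.
have -> : n = j by apply/eqP; rewrite eqn_leq -ltnS andbC.
by rewrite mulVf ?normr_eq0 ?hx // normr1.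
Qed.

Lemma ind_S lo hi : @ind R lo hi.+1 =
  if (lo <= hi)%N then (fun n => ind lo hi n + ind hi hi.+1 n) else ind lo hi.
Proof.
case: ifP => h; apply/funext => n; rewrite /ind.
all: by repeat (case: ifP => ?); rewrite ?addr0 ?add0r //; lia.
Qed.

Lemma ind_X lo hi : X (@ind R lo hi).
Proof.
elim: hi => [|hi IH].
  have -> : @ind R lo 0 = fun _ => 0 by apply/funext => n; rewrite /ind ltn0 andbF.
  exact: ri_zero hri.
rewrite ind_S; case: ifP => _ //.
exact: (ri_add hri IH (e_X hi)).
Qed.

Definition nu := nrm (@ind R 0 1).

Lemma nrm_e j : nrm (@ind R j j.+1) = nu.
Proof.
apply: (ri_rearr hri (ind_X 0 1) _).2 => l l0.
have E : forall k, [set n | l < `|@ind R k k.+1 n|] = if l < 1 then [set k] else set0.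
  move=> k; case: ifP => hl; apply/seteqP; split => n /=; rewrite /ind.
  - case: ifP => hn; rewrite ?normr1 ?normr0 => h.
      by apply/eqP; rewrite eqn_leq -ltnS andbC.
    by have := lt_trans l0 h; rewrite ltxx.
  - by move=> ->; rewrite leqnn ltnSn normr1.
  - case: ifP => hn; rewrite ?normr1 ?normr0 => h.
      by rewrite h in hl.
    by have := lt_trans l0 h; rewrite ltxx.
  - by [].
rewrite !E; case: ifP => _; first exact: eq_card1.
exact: card_eq00.
Qed.

Lemma nu_gt0 : 0 < nu.
Proof.
rewrite lt_neqAle (ri_nrm_ge0 hri (ind_X 0 1)) andbT eq_sym; apply/eqP => h.
have := ri_nrm_eq0 hri (ind_X 0 1) h => /(congr1 (fun f => f 0%N)).
by rewrite /ind /= => /eqP; rewrite oner_eq0.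
Qed.

Lemma nrm_ind0 lo : nrm (@ind R lo lo) = 0.
Proof.
have -> : @ind R lo lo = fun _ => 0.
  by apply/funext => n; rewrite /ind; case: (leqP lo n) => //= h; rewrite ltnNge h.
exact: nrm0.
Qed.

Lemma nrm_indS lo hi : nrm (@ind R lo hi.+1) <= nrm (@ind R lo hi) + nu.
Proof.
rewrite ind_S; case: ifP => _.
  by rewrite -(nrm_e hi); exact: (ri_nrm_tri hri (ind_X lo hi) (e_X hi)).
by rewrite lerDl; apply: ltW; exact: nu_gt0.
Qed.

Lemma ind_unbounded lo (Mb : R) : exists L, Mb < nrm (@ind R lo (lo + L)).
Proof.
apply: contrapT => H.
have H' : forall L, nrm (@ind R lo (lo + L)) <= Mb.
  by move=> L; rewrite leNgt; apply/negP => h; apply: H; exists L.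
pose x : nat -> R := fun n => if (lo <= n)%N then 1 else 0.
have h1 : forall k n, @ind R lo (lo + k) n <= ind lo (lo + k.+1) n.
  by move=> k n; rewrite /ind; repeat (case: ifP => ?) => //; lia.
have h2 : forall n, (fun k => @ind R lo (lo + k) n) @ \oo --> (x n : R^o).
  move=> n; apply: (@cvg_near_cst _ R^o (x n)); exists n.+1 => // k /= hk.
  by rewrite /ind /x; repeat (case: ifP => ?) => //; lia.
have [Xx _] := @hfat x (fun L => @ind R lo (lo + L)) (fun k n => ind_ge0 lo (lo + k) n)
  h1 h2 (fun k => ind_X _ _) (ex_intro _ Mb H').
pose xs' : nat -> nat -> R := fun m n => if (lo + m <= n)%N then 1 else 0.
have g1 : forall k n, 0 <= xs' k n <= `|x n|.
  by move=> k n; rewrite /xs' /x; repeat (case: ifP => ?); rewrite ?normr1 ?normr0 ?lexx ?ler01 //; lia.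
have g2 : forall k n, xs' k.+1 n <= xs' k n.
  by move=> k n; rewrite /xs'; repeat (case: ifP => ?); rewrite ?lexx ?ler01 //; lia.
have g3 : forall n, (fun k => xs' k n) @ \oo --> 0.
  move=> n; first [apply: (@cvg_near_cst _ R^o 0) | apply: cvg_near_cst | apply: (cvg_near_cst (0:R))]; exists n.+1 => // k /= hk.
  by rewrite /xs'; repeat (case: ifP => ?) => //; lia.
have hc := @hoc x Xx xs' g1 g2 g3.
have [N _ hN] := cvgr0_norm_lt _ hc _ nu_gt0.
have := hN N (leqnn N) => /=.
have k1 : forall n, `|xs' N n| <= `|x n|.
  by move=> n; rewrite /xs' /x; repeat (case: ifP => ?); rewrite ?normr1 ?normr0 //; lia.
have k2 : forall n, `|@ind R (lo + N) (lo + N).+1 n| <= `|xs' N n|.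
  by move=> n; rewrite /ind /xs'; repeat (case: ifP => ?); rewrite ?normr1 ?normr0 //; lia.
have [Xs' _] := ri_ideal hri Xx k1.
have [_ hle] := ri_ideal hri Xs' k2.
rewrite nrm_e in hle.
rewrite ger0_norm ?(ri_nrm_ge0 hri Xs') //.
by rewrite ltNge hle.
Qed.

End XFacts.
Definition th {R : realType} (k : nat) : R := (k.+2)%:R / (k.+1)%:R.
Definition p2 {R : realType} (k : nat) : R := (2 ^ k)%:R.

Lemma p2_gt0 {R : realType} k : 0 < @p2 R k.
Proof. by rewrite /p2 ltr0n expn_gt0. Qed.
Lemma p2S {R : realType} k : @p2 R k.+1 = 2 * p2 k.
Proof. by rewrite /p2 expnS natrM. Qed.
Lemma p2_ge8 {R : realType} k : 8 <= @p2 R k.+3.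
Proof.
rewrite /p2 ler_nat !expnS mulnA mulnA.
by apply: leq_pmulr; rewrite expn_gt0.
Qed.
Lemma th_gt1 {R : realType} k : 1 < @th R k.
Proof. by rewrite /th ltr_pdivlMr ?ltr0n // mul1r ltr_nat. Qed.

Record stepspec {R : realType} (X : set (nat -> R)) (nrm : (nat -> R) -> R)
  (F : R -> \bar R) (k a : nat) (u : R) (L : nat) : Prop := StepSpec {
  ss_u : 0 < u;
  ss_L : (0 < L)%N;
  ss_Ffin : F u \is a fin_num;
  ss_Fthfin : F (th k * u) \is a fin_num;
  ss_fpos : 0 < fine (F u);
  ss_pre : fine (F (th k * u)) * nrm (ind a (k.+2 * a)) <= 8^-1;
  ss_up : fine (F u) * nrm (ind a (a + L)) <= (p2 k.+2)^-1;
  ss_low : 1 <= fine (F (th k * u)) * nrm (ind a (a + L))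
}.

Section Step.
Variable R : realType.
Variable X : set (nat -> R).
Variable nrm : (nat -> R) -> R.
Variable F : R -> \bar R.
Hypothesis hri : ri_space X nrm.
Hypothesis hoc : order_continuous X nrm.
Hypothesis hfat : fatou_property X nrm.
Hypothesis hF : orlicz F.
Hypothesis hF0 : forall u : R, 0 <= u -> F u = 0%E -> u = 0.
Hypothesis hD : ~ Delta2_0 F.

Lemma step k a : exists u L, stepspec X nrm F k a u L.
Proof.
have [b [b0 Fbf]] := Ffin_exists hF hF0 hD.
pose B := fine (F b).
have B0 : 0 <= B by rewrite /B fine_ge0 // Fge0 // ltW.
pose P := nrm (@ind R a (k.+2 * a)).
have P0 : 0 <= P by exact: (ri_nrm_ge0 hri (ind_X hri _ _)).
pose t : R := th k.
have t1 : 1 < t := th_gt1 k.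
pose Rk : R := p2 k.+3.
have Rk8 : 8 <= Rk := p2_ge8 k.
have nu0 := nu_gt0 hri.
pose D := t * (B + 1) * (P + nu nrm + 1) * Rk.
have D0 : 0 < D by rewrite /D; apply: mulr_gt0; [apply: mulr_gt0; [apply: mulr_gt0|]|]; lra.
pose eta := b / D.
have eta0 : 0 < eta by apply: divr_gt0.
have [u [u0 ueta hu]] := Dbig hF hF0 hD t1 (p2_gt0 k.+3 : 0 < Rk) eta0.
have Rk0 : 0 < Rk := p2_gt0 k.+3.
pose W := (P + nu nrm + 1) * Rk.
have W0 : 0 < W by rewrite /W; apply: mulr_gt0 => //; lra.
have hE : t * eta * ((B + 1) * W) = b.
  rewrite /eta /D /W; field.
  by rewrite -/(p2 k.+3) -/Rk !gt_eqF //; lra.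
have W1 : 1 <= W.
  rewrite /W -[1]mulr1; apply: ler_pM; rewrite ?ler01 //; last by lra.
  by rewrite mulr1; lra.
have teta : t * eta <= b.
  have BW : 1 <= (B + 1) * W by nra.
  have te0 : 0 <= t * eta by apply: mulr_ge0; lra.
  nra.
have tu_b : t * u <= b.
  by apply: le_trans teta; apply: ler_wpM2l => //; lra.
have u_tu : u <= t * u by rewrite ler_peMl //; lra.
have tu0 : 0 <= t * u by apply: mulr_ge0; lra.
have Fconv := Fconvb hF b0 tu0 tu_b.
have [Fthfin fthle] : F (t * u) \is a fin_num /\ fine (F (t * u)) <= fine ((t * u / b)%:E * F b).
  apply: fin_le => //; first by apply: Fge0.
  by rewrite fin_numM.
have [Ffin fule] := fin_le (Fge0 hF (ltW u0)) (Fmono hF (ltW u0) u_tu) Fthfin.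
rewrite fineM // -/B in fthle.
pose fu := fine (F u); pose ft := fine (F (t * u)).
have fu0 : 0 < fu by rewrite /fu -lte_fin fineK //; apply: Fpos.
have hu' : Rk * fu < ft.
  by move: hu; rewrite -(fineK Ffin) -(fineK Fthfin) -EFinM lte_fin.
have ftW : ft * W <= 1.
  have h1 : ft * b <= t * u * B by rewrite -ler_pdivlMr // (mulrAC (t * u)).
  have h2 : t * u <= t * eta by apply: ler_wpM2l => //; lra.
  have BW0 : 0 <= (B + 1) * W by apply: mulr_ge0; lra.
  have h3 : ft * b * ((B + 1) * W) <= t * u * B * ((B + 1) * W) by apply: ler_wpM2r.
  have h4 : t * u * B * ((B + 1) * W) <= t * eta * B * ((B + 1) * W).
    by apply: ler_wpM2r => //; apply: ler_wpM2r.
  have h5 : t * eta * B * ((B + 1) * W) = b * B by rewrite -hE; ring.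
  have bB : 0 < b * (B + 1) by apply: mulr_gt0; lra.
  rewrite -(ler_pM2r bB) mul1r.
  have : ft * W * (b * (B + 1)) = ft * b * ((B + 1) * W) by ring.
  lra.
have ft0 : 0 <= ft by rewrite /ft fine_ge0 // Fge0.
have fuft : fu <= ft := fule.
have pre : ft * P <= 8^-1.
  have a1 : ft * P * Rk <= ft * W.
    by rewrite /W mulrA; apply: ler_wpM2r; [lra| apply: ler_wpM2l => //; lra].
  have a2 : ft * P * 8 <= ft * P * Rk by apply: ler_wpM2l => //; apply: mulr_ge0.
  have a3 : 0 <= ft * P by apply: mulr_ge0.
  rewrite -[8^-1]mul1r ler_pdivlMr //; lra.
have fnu : fu * nu nrm * Rk <= 1.
  have a1 : fu * nu nrm * Rk <= ft * W.
    rewrite /W mulrA; apply: ler_wpM2r; first lra.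
    apply: (@le_trans _ _ (ft * nu nrm)); first by apply: ler_wpM2r => //; apply: ltW.
    by apply: ler_wpM2l => //; lra.
  lra.
pose Pw := fun L => Rk^-1 <= fu * nrm (@ind R a (a + L)).
have exPw : exists L, Pw L.
  have [L hL] := ind_unbounded hri hoc hfat a (Rk^-1 / fu).
  exists L; rewrite /Pw; apply: ltW; by rewrite -ltr_pdivrMl // mulrC.
case: (ex_minnP exPw) => L0 hP0 hmin.
have N0 : forall L, 0 <= nrm (@ind R a (a + L)) by move=> L; exact: (ri_nrm_ge0 hri (ind_X hri _ _)).
have L0pos : (0 < L0)%N.
  case: L0 hP0 hmin => // hP0 _; move: hP0; rewrite /Pw addn0 (nrm_ind0 hri) mulr0.
  by rewrite leNgt invr_gt0 Rk0.
have [L' eL] : exists L', L0 = L'.+1 by exists L0.-1; rewrite prednK.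
have nPw : ~~ Pw L'.
  apply/negP => h; have := hmin L' h; rewrite eL; by rewrite ltnn.
have hS : nrm (@ind R a (a + L0)) <= nrm (@ind R a (a + L')) + nu nrm.
  by rewrite eL addnS; exact: (nrm_indS hri a (a + L')).
exists u, L0; constructor => //.
- rewrite -/fu.
  have e2 : (p2 k.+2 : R)^-1 = 2 * Rk^-1.
    by rewrite /Rk (p2S k.+2); field; rewrite gt_eqF // p2_gt0.
  rewrite e2; move: nPw; rewrite /Pw -ltNge => nPw.
  have : fu * nrm (@ind R a (a + L0)) <= fu * nrm (@ind R a (a + L')) + fu * nu nrm.
    by rewrite -mulrDr; apply: ler_wpM2l => //; apply: ltW.
  have : fu * nu nrm <= Rk^-1 by rewrite -[Rk^-1]mul1r ler_pdivlMr.
  lra.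
- rewrite -/t -/ft.
  move: hP0; rewrite /Pw => hP0.
  have : Rk * (fu * nrm (@ind R a (a + L0))) <= ft * nrm (@ind R a (a + L0)).
    by rewrite mulrA; apply: ler_wpM2r => //; apply: ltW.
  have : Rk * Rk^-1 <= Rk * (fu * nrm (@ind R a (a + L0))) by apply: ler_wpM2l => //; apply: ltW.
  rewrite divff ?gt_eqF //; lra.
Qed.
End Step.
Lemma sum_tail {R : realType} (n a0 : nat) (c : R) :
  \sum_(m < n.+1) (if (a0 <= m)%N then c else 0) = (n.+1 - a0)%:R * c.
Proof.
elim: n => [|n IH].
  rewrite big_ord1 /=.
  by case: a0 => [|a0] /=; rewrite ?mul1r // mul0r.
rewrite big_ord_recr IH /=.
case: (leqP a0 n.+1) => h.
  by rewrite (subSn h) -natr1 mulrDl mul1r.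
rewrite addr0.
have -> : (n.+1 - a0 = 0)%N by lia.
by have -> : (n.+2 - a0 = 0)%N by lia.
Qed.

Lemma cesaro_le {R : realType} (f g : nat -> R) n :
  (forall m, (m <= n)%N -> f m <= g m) -> Defs.cesaro f n <= Defs.cesaro g n.
Proof.
move=> h; rewrite /Defs.cesaro; apply: ler_wpM2l; first by rewrite invr_ge0.
by apply: ler_sum => i _; apply: h; rewrite -ltnS.
Qed.

Lemma cesaro_ge0 {R : realType} (f : nat -> R) n :
  (forall m, (m <= n)%N -> 0 <= f m) -> 0 <= Defs.cesaro f n.
Proof.
move=> h; rewrite /Defs.cesaro; apply: mulr_ge0; first by rewrite invr_ge0.
by apply: sumr_ge0 => i _; apply: h; rewrite -ltnS.
Qed.

Lemma cesaro_abs_ge0 {R : realType} (f : nat -> R) n : 0 <= Defs.cesaro (abss f) n.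
Proof. by apply: cesaro_ge0 => m _; rewrite /abss. Qed.

Lemma logn_fiber i j : exists k, (j <= k)%N /\ logn 2 k.+1 = i.
Proof.
have hp : (0 < 2 ^ i * j.*2.+1)%N by rewrite muln_gt0 expn_gt0.
exists (2 ^ i * j.*2.+1).-1; rewrite prednK //; split.
  rewrite -ltnS prednK //; apply: (leq_trans _ (leq_pmull _ _)); last by rewrite expn_gt0.
  by rewrite ltnS -addnn leq_addr.
rewrite lognM ?expn_gt0 // pfactorK // logn_coprime ?addn0 //.
by rewrite coprime2n /= odd_double.
Qed.

Lemma th_sq {R : realType} (c : R) k : 3 <= (c - 1) * (k.+1)%:R -> th k ^+ 2 <= c.
Proof.
move=> h; rewrite /th expr_div_n ler_pdivrMr ?exprn_gt0 ?ltr0n //.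
have K1 : 1 <= (k.+1)%:R :> R by rewrite ler1n.
rewrite -natr1 -[(k.+1)%:R + 1]/((k.+1)%:R + 1).
set K := (k.+1)%:R in h K1 *.
nra.
Qed.

Lemma core_ineq {R : realType} (K N A c l bb u : R) :
  1 <= K -> 0 < l -> 0 < u -> (K + 1) * A <= N -> 0 < N -> 0 <= A ->
  (K + 1) ^+ 2 <= c * K ^+ 2 -> c * l <= bb ->
  (K + 1) / K * u <= N^-1 * ((N - A) * (bb * u)) / l.
Proof.
move=> K1 l0 u0 hA N0 A0 hc hb.
have K0 : 0 < K by lra.
have e1 : N^-1 * ((N - A) * (bb * u)) / l = ((N - A) * bb / (N * l)) * u.
  by field; rewrite !gt_eqF.
rewrite e1; apply: ler_wpM2r; first lra.
have Nl : 0 < N * l by apply: mulr_gt0.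
rewrite ler_pdivrMr // mulrAC ler_pdivlMr //.
have NA : 0 <= N - A by nra.
have c0 : 0 < c.
  have : 0 < c * K ^+ 2 by apply: (lt_le_trans _ hc); apply: exprn_gt0; lra.
  by rewrite pmulr_lgt0 // exprn_gt0.
have s1 : N * K <= (N - A) * (K + 1) by nra.
have s2 : N * K * (c * K) <= (N - A) * (K + 1) * (c * K).
  by apply: ler_wpM2r => //; apply: mulr_ge0; lra.
have s3 : N * (K + 1) ^+ 2 <= N * (c * K ^+ 2) by apply: ler_wpM2l => //; lra.
have s5 : N * (K + 1) <= (N - A) * c * K.
  have : N * (K + 1) * (K + 1) <= (N - A) * c * K * (K + 1).
    have -> : N * (K + 1) * (K + 1) = N * (K + 1) ^+ 2 by rewrite expr2 mulrA.
    have -> : (N - A) * c * K * (K + 1) = (N - A) * (K + 1) * (c * K) by ring.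
    have s3' : N * (c * K ^+ 2) = N * K * (c * K) by rewrite expr2; ring.
    lra.
  by rewrite ler_pM2r //; lra.
have s4 : (N - A) * (c * l) * K <= (N - A) * bb * K.
  by apply: ler_wpM2r; [lra| apply: ler_wpM2l].
have s6 : N * (K + 1) * l <= (N - A) * c * K * l by apply: ler_wpM2r => //; lra.
have : (K + 1) * (N * l) = N * (K + 1) * l by ring.
have : (N - A) * c * K * l = (N - A) * (c * l) * K by ring.
lra.
Qed.
Section Main.
Variable R : realType.
Variable X : set (nat -> R).
Variable nrm : (nat -> R) -> R.
Variable F : R -> \bar R.
Hypothesis hri : ri_space X nrm.
Hypothesis hoc : order_continuous X nrm.
Hypothesis hfat : fatou_property X nrm.
Hypothesis hF : orlicz F.
Hypothesis hcl : CL_closed_cesaro X nrm F.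
Hypothesis hF0 : forall u : R, 0 <= u -> F u = 0%E -> u = 0.
Variable u : nat -> R.
Variable a L : nat -> nat.
Hypothesis ha0 : a 0 = 0%N.
Hypothesis haS : forall k, a k.+1 = (a k + L k)%N.
Hypothesis hsp : forall k, stepspec X nrm F k (a k) (u k) (L k).

Lemma a_lt k : (a k < a k.+1)%N.
Proof. by rewrite haS -[X in (X < _)%N]addn0 ltn_add2l (ss_L (hsp k)). Qed.

Lemma a_mono k k' : (k <= k')%N -> (a k <= a k')%N.
Proof.
move/subnKC => <-; elim: (k' - k)%N => [|d IH]; first by rewrite addn0.
by rewrite addnS (leq_trans IH) // ltnW // a_lt.
Qed.

Lemma a_ge k : (k <= a k)%N.
Proof. elim: k => [|k IH] //; exact: leq_ltn_trans IH (a_lt k). Qed.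

Lemma blk_ex n : exists k, (a k <= n < a k.+1)%N.
Proof.
elim: n => [|n [k /andP[h1 h2]]].
  by exists 0%N; have := a_lt 0; rewrite ha0.
case: (ltngtP n.+1 (a k.+1)) => h.
- by exists k; apply/andP; split; lia.
- lia.
- by exists k.+1; have := a_lt k.+1 => ?; apply/andP; split; lia.
Qed.

Definition blk n := ex_minn (blk_ex n).

Lemma blk_spec n : (a (blk n) <= n < a (blk n).+1)%N.
Proof. by rewrite /blk; case: ex_minnP. Qed.

Lemma blk_eq k n : (a k <= n < a k.+1)%N -> blk n = k.
Proof.
move=> /andP[h1 h2]; have /andP[h3 h4] := blk_spec n.
case: (ltngtP (blk n) k) => // h.
- have := a_mono h; lia.
- have := a_mono h; lia.
Qed.

Definition w n := u (blk n).
Lemma w_gt0 n : 0 < w n. Proof. exact: ss_u (hsp _). Qed.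

Lemma ind_blk k n : @ind R (a k) (a k.+1) n = if blk n == k then 1 else 0.
Proof.
rewrite /ind; case: ifP => h.
  by rewrite (blk_eq h) eqxx.
case: eqP => // e; move: h; rewrite -e; by rewrite blk_spec.
Qed.

Definition G K n := \sum_(k < K) fine (F (u k)) * @ind R (a k) (a k.+1) n.

Lemma G_closed K n : G K n = if (blk n < K)%N then fine (F (w n)) else 0.
Proof.
elim: K => [|K IH]; first by rewrite /G big_ord0.
rewrite /G big_ord_recr /= -/(G K n) IH ind_blk /w.
case: eqP => [->|ne].
  by rewrite ltnn ltnSn mulr1 add0r.
rewrite mulr0 addr0.
by case: ifP => h1; case: ifP => h2 //; lia.
Qed.

Lemma G_succ K : G K.+1 = (fun n => G K n + fine (F (u K)) * @ind R (a K) (a K.+1) n).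
Proof. by apply/funext => n; rewrite /G big_ord_recr. Qed.

Lemma G_zero : G 0 = (fun _ => 0).
Proof. by apply/funext => n; rewrite /G big_ord0. Qed.

Lemma G_X K : X (G K).
Proof.
elim: K => [|K IH]; first by rewrite G_zero; exact: ri_zero hri.
by rewrite G_succ; exact: (ri_add hri IH (ri_scale hri _ (ind_X hri _ _))).
Qed.

Lemma G_nrm K : nrm (G K) <= 2^-1 - (p2 K.+1)^-1.
Proof.
elim: K => [|K IH].
  by rewrite G_zero (nrm0 hri) /p2 expn1 subrr.
rewrite G_succ.
apply: le_trans (ri_nrm_tri hri (G_X K) (ri_scale hri _ (ind_X hri _ _))) _.
rewrite (ri_nrm_hom hri _ (ind_X hri _ _)) ger0_norm; last first.
  by apply: ltW; exact: ss_fpos (hsp K).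
have := ss_up (hsp K); rewrite -haS => h.
have e : (p2 K.+1 : R)^-1 = 2 * (p2 K.+2)^-1.
  by rewrite (p2S K.+1); field; rewrite gt_eqF // p2_gt0.
rewrite e in IH; lra.
Qed.

Lemma Fw_fin n : F (w n) \is a fin_num.
Proof. exact: ss_Ffin (hsp _). Qed.

Lemma Fw_X : X (fun n => fine (F (w n))) /\ nrm (fun n => fine (F (w n))) <= 1.
Proof.
have g0 : forall K n, 0 <= G K n.
  move=> K n; rewrite G_closed; case: ifP => // _.
  by rewrite fine_ge0 // Fge0 // ltW // w_gt0.
have g1 : forall K n, G K n <= G K.+1 n.
  move=> K n; rewrite !G_closed; case: ifP => h1; case: ifP => h2 //.
  - lia.
  - by rewrite fine_ge0 // Fge0 // ltW // w_gt0.
have g2 : forall n, (fun K => G K n) @ \oo --> ((fun n => fine (F (w n))) n : R^o).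
  move=> n; apply: (@cvg_near_cst _ R^o); exists (blk n).+1 => // K /= hK.
  by rewrite G_closed hK.
have gb : forall K, nrm (G K) <= 2^-1.
  by move=> K; apply: le_trans (G_nrm K) _; rewrite gerDl oppr_le0 invr_ge0 ltW // p2_gt0.
have [hX [_ hc]] := @hfat _ G g0 g1 g2 G_X (ex_intro _ 2^-1 gb).
split => //.
have : nrm (fun n => fine (F (w n))) <= 2^-1.
  apply: (cvgr_to_le hc); exact: nearW.
lra.
Qed.

Lemma CLw : CL_class X nrm F w.
Proof.
have ew : (fun n => F (`|w n| / 1)) = (fun n => F (w n)).
  by apply/funext => n; rewrite divr1 ger0_norm // ltW // w_gt0.
have ew' : (fun n => F `|w n|) = (fun n => F (w n)).
  by apply/funext => n; rewrite ger0_norm // ltW // w_gt0.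
have [hX hn] := Fw_X.
split; last by rewrite ew'; split => //; exact: Fw_fin.
exists 1; split; first exact: ltr01.
rewrite ew; split; first by split => //; exact: Fw_fin.
exact: hn.
Qed.

Lemma Cw : inXe X (fun n => F `|Defs.cesaro (abss w) n|).
Proof. exact: (hcl CLw).2. Qed.

Definition wM m n := if (m <= n)%N then w n else 0.

Lemma wM_ge0 m n : 0 <= wM m n.
Proof. by rewrite /wM; case: ifP => // _; apply: ltW; exact: w_gt0. Qed.

Definition Hm m n := fine (F (Defs.cesaro (abss (wM m)) n)).

Lemma FcM m n : F (Defs.cesaro (abss (wM m)) n) \is a fin_num /\
  Hm m n <= fine (F `|Defs.cesaro (abss w) n|).
Proof.
rewrite /Hm; apply: fin_le.
- apply: (Fge0 hF); exact: cesaro_abs_ge0.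
- have -> : `|Defs.cesaro (abss w) n| = Defs.cesaro (abss w) n.
    by apply: ger0_norm; exact: cesaro_abs_ge0.
  apply: (Fmono hF); first exact: cesaro_abs_ge0.
  apply: cesaro_le => k _; rewrite /abss /wM; case: ifP => _ //.
  by rewrite normr0.
- exact: Cw.1.
Qed.

Lemma exists_M : exists M, X (Hm M) /\ nrm (Hm M) < 1.
Proof.
pose x := fun n => fine (F `|Defs.cesaro (abss w) n|).
have Xx : X x := Cw.2.
have Hm0 : forall m n, 0 <= Hm m n.
  by move=> m n; rewrite /Hm fine_ge0 // Fge0 // cesaro_abs_ge0.
have g1 : forall m n, 0 <= Hm m n <= `|x n|.
  move=> m n; rewrite Hm0 /=; apply: le_trans (FcM m n).2 _; exact: ler_norm.
have g2 : forall m n, Hm m.+1 n <= Hm m n.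
  move=> m n; apply: (fin_le _ _ (FcM m n).1).2.
  - by apply: (Fge0 hF); exact: cesaro_abs_ge0.
  - apply: (Fmono hF); first exact: cesaro_abs_ge0.
    apply: cesaro_le => k _; rewrite /abss /wM.
    case: ifP => h1; case: ifP => h2 //; rewrite ?normr0 //; lia.
have g3 : forall n, (fun m => Hm m n) @ \oo --> 0.
  move=> n; first [apply: (@cvg_near_cst _ R^o 0) | apply: cvg_near_cst | apply: (cvg_near_cst (0:R))]; exists n.+1 => // m /= hm.
  rewrite /Hm (_ : Defs.cesaro _ _ = 0) ?F0 //.
  rewrite /Defs.cesaro big1 ?mulr0 // => i _.
  rewrite /abss /wM ifF ?normr0 //.
  by apply/negbTE; rewrite -ltnNge (leq_trans _ hm) // ltnS -ltnS ltn_ord.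
have hc := @hoc x Xx Hm g1 g2 g3.
have [N _ hN] := cvgr0_norm_lt _ hc _ ltr01.
have hXN : X (Hm N).
  apply: (ri_ideal hri Xx _).1 => n.
  by rewrite ger0_norm ?Hm0 //; have /andP[] := g1 N n.
exists N; split => //.
by have := hN N (leqnn N); rewrite /= ger0_norm // (ri_nrm_ge0 hri hXN).
Qed.

End Main.
Lemma ind_split3 {R : realType} (x y z n : nat) : (x <= y)%N ->
  `|@ind R x z n| <= `|ind y z n + ind x y n|.
Proof.
move=> h; rewrite /ind.
by repeat (case: ifP => ?); rewrite ?addr0 ?add0r ?normr1 ?normr0 ?lexx ?normr_ge0 //; lia.
Qed.

Section WithM.
Variable R : realType.
Variable X : set (nat -> R).
Variable nrm : (nat -> R) -> R.
Variable F : R -> \bar R.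
Hypothesis hri : ri_space X nrm.
Hypothesis hoc : order_continuous X nrm.
Hypothesis hfat : fatou_property X nrm.
Hypothesis hF : orlicz F.
Hypothesis hcl : CL_closed_cesaro X nrm F.
Hypothesis hF0 : forall u : R, 0 <= u -> F u = 0%E -> u = 0.
Variable u : nat -> R.
Variable a L : nat -> nat.
Hypothesis ha0 : a 0 = 0%N.
Hypothesis haS : forall k, a k.+1 = (a k + L k)%N.
Hypothesis hsp : forall k, stepspec X nrm F k (a k) (u k) (L k).
Variable M : nat.
Hypothesis XHM : X (Hm ha0 haS hsp M).
Hypothesis nHM : nrm (Hm ha0 haS hsp M) < 1.

Let bk := blk ha0 haS hsp.
Let wm := wM ha0 haS hsp.
Definition idx n := logn 2 (bk n).+1.
Definition T (b : nat -> R) n := b (idx n) * wm M n.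

Lemma sup_facts (b : nat -> R) : Defs.linf b ->
  (forall n, `|b n| <= Defs.linf_norm b) /\
  (forall l, l < Defs.linf_norm b -> exists i, l < `|b i|).
Proof.
move=> [Mb hMb].
have ne : range (fun n => `|b n|) !=set0 by exists `|b 0%N|; exists 0%N.
have hs : has_sup (range (fun n => `|b n|)).
  by split => //; exists Mb => _ [n _ <-].
split.
  by move=> n; apply: (sup_upper_bound hs); exists n.
move=> l hl; have [_ [i _ <-] hi] := sup_gt ne hl; by exists i.
Qed.

Lemma wM_ge0' m n : 0 <= wm m n.
Proof. exact: wM_ge0. Qed.

Lemma ces_T_le (b : nat -> R) s : (forall n, `|b n| <= s) ->
  forall n, Defs.cesaro (abss (T b)) n <= s * Defs.cesaro (abss (wm M)) n.
Proof.
move=> hs n; rewrite /Defs.cesaro mulrCA; apply: ler_wpM2l; first by rewrite invr_ge0.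
rewrite mulr_sumr; apply: ler_sum => i _; rewrite /abss /T normrM.
by apply: ler_wpM2r.
Qed.

Lemma upper (b : nat -> R) : Defs.linf b -> forall l, Defs.linf_norm b < l ->
  XF_adm X nrm F (Defs.cesaro (abss (T b))) l.
Proof.
move=> hb l hl; have [hs _] := sup_facts hb.
set s := Defs.linf_norm b in hs hl.
have s0 : 0 <= s by apply: le_trans (hs 0%N).
have l0 : 0 < l by apply: le_lt_trans hl.
have key : forall n, (F (`|Defs.cesaro (abss (T b)) n| / l) <=
    F (Defs.cesaro (abss (wm M)) n))%E.
  move=> n; apply: (Fmono hF); first by apply: divr_ge0 => //; apply: ltW.
  rewrite ger0_norm; last exact: cesaro_abs_ge0.
  rewrite ler_pdivrMr //.
  apply: le_trans (ces_T_le hs n) _.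
  rewrite mulrC; apply: ler_wpM2l; [exact: cesaro_abs_ge0| exact: ltW].
have fk : forall n, F (`|Defs.cesaro (abss (T b)) n| / l) \is a fin_num /\
    fine (F (`|Defs.cesaro (abss (T b)) n| / l)) <= Hm ha0 haS hsp M n.
  move=> n; apply: fin_le (key n) (FcM hri hfat hF hcl ha0 haS hsp M n).1.
  by apply: (Fge0 hF); apply: divr_ge0 => //; apply: ltW.
have hid : forall n, `|fine (F (`|Defs.cesaro (abss (T b)) n| / l))| <=
    `|Hm ha0 haS hsp M n|.
  move=> n; have [_ h] := fk n.
  have h0 : 0 <= fine (F (`|Defs.cesaro (abss (T b)) n| / l)).
    by apply: fine_ge0; apply: (Fge0 hF); apply: divr_ge0 => //; apply: ltW.
  by rewrite (ger0_norm h0) (ger0_norm (le_trans h0 h)).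
have [hX hn] := ri_ideal hri XHM hid.
split => //; split; first by split => // n; exact: (fk n).1.
by rewrite /nrmXe; apply: le_trans hn (ltW nHM).
Qed.

Lemma lower (b : nat -> R) : Defs.linf b -> forall l,
  XF_adm X nrm F (Defs.cesaro (abss (T b))) l -> Defs.linf_norm b <= l.
Proof.
move=> hb l [l0 [[hfin hXg] _]].
rewrite leNgt; apply/negP => hls.
have [_ hgt] := sup_facts hb.
have [i0 hi0] := hgt l hls.
set bb := `|b i0| in hi0.
pose c := bb / l.
have c1 : 1 < c by rewrite /c ltr_pdivlMr // mul1r.
have c10 : 0 <= 3 / (c - 1) by apply: divr_ge0 => //; lra.
pose K0 := Num.Def.archi_bound (3 / (c - 1)).
have hK0 : 3 / (c - 1) < K0%:R := archi_boundP c10.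
pose g := fun n => fine (F (`|Defs.cesaro (abss (T b)) n| / l)).
have g0 : forall n, 0 <= g n.
  by move=> n; apply: fine_ge0; apply: (Fge0 hF); apply: divr_ge0 => //; apply: ltW.
pose tl := fun m n => if (m <= n)%N then g n else 0.
have t1 : forall m n, 0 <= tl m n <= `|g n|.
  by move=> m n; rewrite /tl ger0_norm //; case: ifP => _; rewrite ?lexx ?g0.
have t2 : forall m n, tl m.+1 n <= tl m n.
  by move=> m n; rewrite /tl; case: ifP => h1; case: ifP => h2 //; rewrite ?lexx ?g0 //; clear -h1 h2; lia.
have t3 : forall n, (fun m => tl m n) @ \oo --> 0.
  move=> n; first [apply: (@cvg_near_cst _ R^o 0) | apply: cvg_near_cst | apply: (cvg_near_cst (0:R))].
  exists n.+1 => // m /= hm; rewrite /tl ifF //; apply/negbTE; rewrite -ltnNge; clear -hm; lia.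
have hc := @hoc g hXg tl t1 t2 t3.
have h2i : 0 < (2:R)^-1 by rewrite invr_gt0.
have [m0 _ hm0] := cvgr0_norm_lt _ hc _ h2i.
have Xtl : X (tl m0).
  by apply: (ri_ideal hri hXg _).1 => n; have /andP[h1 h2] := t1 m0 n; rewrite ger0_norm.
have ntl : nrm (tl m0) < 2^-1.
  by have := hm0 m0 (leqnn m0); rewrite /= ger0_norm // (ri_nrm_ge0 hri Xtl).
have [k [hk hlog]] := logn_fiber i0 (K0 + m0 + M).
have hak : (k <= a k)%N := a_ge haS hsp k.
pose ft := fine (F (th k * u k)).
have sp := hsp k.
have uk0 : 0 < u k := ss_u sp.
have ft0 : 0 <= ft by rewrite /ft fine_ge0 // (Fge0 hF) // mulr_ge0 // ?ltW // (lt_trans ltr01 (th_gt1 k)).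
pose J := @ind R (k.+2 * a k) (a k.+1).
have core : forall n, `|ft * J n| <= `|tl m0 n|.
  move=> n; rewrite /J /ind; case: ifP => hn; last by rewrite mulr0 normr0.
  have /andP[hn1 hn2] := hn.
  rewrite mulr1 /tl ifT; last first.
    apply: leq_trans hn1; apply: (leq_trans _ (leq_pmull (a k) (ltn0Sn k.+1))).
    by apply: leq_trans hak; clear -hk; lia.
  rewrite ger0_norm // ger0_norm //.
  rewrite /g; apply: (fin_le _ _ (hfin n)).2.
    by apply: (Fge0 hF); rewrite mulr_ge0 // ?ltW // (lt_trans ltr01 (th_gt1 k)).
  apply: (Fmono hF); first by rewrite mulr_ge0 // ?ltW // (lt_trans ltr01 (th_gt1 k)).
  rewrite ger0_norm; last exact: cesaro_abs_ge0.
  have hsum : (n.+1 - a k)%:R * (bb * u k) <= \sum_(m < n.+1) abss (T b) m.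
    rewrite -sum_tail; apply: ler_sum => m _; case: ifP => ham; last by rewrite /abss.
    have hm1 : (a k <= m < a k.+1)%N by rewrite ham /=; have := ltn_ord m; clear -hn2; lia.
    have eb : bk m = k := blk_eq ha0 haS hsp hm1.
    have eb2 : blk ha0 haS hsp m = k := blk_eq ha0 haS hsp hm1.
    rewrite /abss /T /idx eb hlog /wm /wM ifT; last by clear -hk hak ham; lia.
    by rewrite /w eb2 normrM (ger0_norm (ltW uk0)).
  set N : R := (n.+1)%:R.
  set A : R := (a k)%:R.
  set K : R := (k.+1)%:R.
  have eNA : (n.+1 - a k)%:R = N - A.
    rewrite natrB //; clear -hn1; nia.
  rewrite eNA in hsum.
  have K1 : 1 <= K by rewrite /K ler1n.
  have hth : th k = (K + 1) / K by rewrite /th -natr1.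
  have h3 : 3 <= (c - 1) * K.
    have : K0%:R <= K by rewrite /K ler_nat; clear -hk; lia.
    move: hK0; rewrite ltr_pdivrMr; last by lra.
    move=> h1 h2; have : K0%:R * (c - 1) <= K * (c - 1) by apply: ler_wpM2r => //; lra.
    lra.
  have hcK : (K + 1) ^+ 2 <= c * K ^+ 2.
    have := th_sq h3; rewrite hth expr_div_n ler_pdivrMr //; apply: exprn_gt0; lra.
  have hA : (K + 1) * A <= N.
    rewrite /K natr1 /A /N -natrM ler_nat; clear -hn1; lia.
  have N0 : 0 < N by rewrite /N ltr0n.
  have A0 : 0 <= A by rewrite /A ler0n.
  have hcl' : c * l <= bb by rewrite /c divfK ?gt_eqF.
  rewrite hth; apply: le_trans (core_ineq K1 l0 uk0 hA N0 A0 hcK hcl') _.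
  rewrite ler_pdivlMr // divfK ?gt_eqF //.
  rewrite /Defs.cesaro -/N; apply: ler_wpM2l; first by rewrite invr_ge0 ltW.
  exact: hsum.
have [_ hJ] := ri_ideal hri Xtl core.
rewrite (ri_nrm_hom hri ft (ind_X hri _ _)) ger0_norm // in hJ.
have hlow := ss_low sp; rewrite -haS in hlow.
have hpre := ss_pre sp.
have hsplit : nrm (@ind R (a k) (a k.+1)) <= nrm J + nrm (@ind R (a k) (k.+2 * a k)).
  have hp : forall n, `|@ind R (a k) (a k.+1) n| <= `|J n + @ind R (a k) (k.+2 * a k) n|.
    move=> n; apply: ind_split3; exact: leq_pmull.
  have [_ h] := ri_ideal hri (ri_add hri (ind_X hri _ _) (ind_X hri _ _)) hp.
  apply: le_trans h _; exact: (ri_nrm_tri hri (ind_X hri _ _) (ind_X hri _ _)).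
have : ft * nrm (@ind R (a k) (a k.+1)) <= ft * nrm J + ft * nrm (@ind R (a k) (k.+2 * a k)).
  by rewrite -mulrDr; apply: ler_wpM2l.
rewrite -/ft in hlow hpre.
lra.
Qed.

Lemma main_T : contains_lattice_isometric_linf (CXF X nrm F) (CXF_norm X nrm F).
Proof.
exists T; split; [|split; [|split; [|split]]].
- move=> b hb; exists (Defs.linf_norm b + 1); apply: upper => //.
  by rewrite ltrDl ltr01.
- by move=> b1 b2 _ _; apply/funext => n; rewrite /T mulrDl.
- by move=> c0 b _; apply/funext => n; rewrite /T mulrA.
- by move=> b1 b2 _ _; apply/funext => n; rewrite /T maxr_pMl //; exact: wM_ge0'.
move=> b hb; rewrite /CXF_norm /XF_norm.
set S := XF_adm X nrm F (Defs.cesaro (abss (T b))).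
set s := Defs.linf_norm b.
have hlo : forall l, S l -> s <= l := lower hb.
have hup : forall l, s < l -> S l := upper hb.
have Sne : S !=set0 by exists (s + 1); apply: hup; rewrite ltrDl ltr01.
have lbS : has_lbound S by exists 0 => l [l0 _]; exact: ltW.
apply/eqP; rewrite eq_le; apply/andP; split.
- apply/ler_addgt0Pr => e e0.
  by apply: (ge_inf lbS); apply: hup; rewrite ltrDl.
- by apply: lb_le_inf => // l hl; exact: hlo.
Qed.

End WithM.
Unset Implicit Arguments.
Theorem corollary4p3 (R : realType) (X : set (nat -> R)) (nrm : (nat -> R) -> R)
  (F : R -> \bar R) :
  ri_space X nrm -> order_continuous X nrm -> fatou_property X nrm ->
  orlicz F -> CL_closed_cesaro X nrm F ->
  (forall u : R, 0 <= u -> F u = 0%E -> u = 0) ->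
  ~ Delta2_0 F ->
  contains_lattice_isometric_linf (CXF X nrm F) (CXF_norm X nrm F).
Proof.
move=> hri hoc hfat hF hcl hF0 hD.
have hst : forall p : nat * nat, exists q : R * nat,
    stepspec X nrm F p.1 p.2 q.1 q.2.
  move=> [k a0]; have [u0 [L0 h]] := step hri hoc hfat hF hF0 hD k a0.
  by exists (u0, L0).
have [f hf] := choice hst.
pose fix a (k : nat) : nat := match k with 0 => 0%N | k'.+1 => (a k' + (f (k', a k')).2)%N end.
pose u k := (f (k, a k)).1.
pose L k := (f (k, a k)).2.
have ha0 : a 0%N = 0%N by [].
have haS : forall k, a k.+1 = (a k + L k)%N by [].
have hsp : forall k, stepspec X nrm F k (a k) (u k) (L k) := fun k => hf (k, a k).
have [M [XHM nHM]] := exists_M hri hoc hfat hF hcl ha0 haS hsp.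
exact: (main_T hri hoc hfat hF hcl XHM nHM).
Qed.
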